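(* Let $n>1$ be an integer with prime factorization $n=\prod_{i=1}^{\ell}p_i^{a_i}$, where $p_1<p_2<\cdots<p_\ell$ are primes, each $a_i\ge1$, and $a_\ell=1$. Suppose that \[ p_i-1=\prod_{j=1}^{i-1}p_j^{a_j}\quad\text{for }1\le i<\ell, \] and that $p_\ell+1=n/p_\ell$. Then $n$ is a prime power Giuga number.
   Context: A prime power Giuga number is a composite positive integer $n$ such that $\sum_{p^k\mid n}\frac{1}{p^k}-\frac1n$ is a positive integer, where the sum ranges over all prime powers $p^k$ ($p$ prime, $k\ge1$) dividing $n$. *)

(* Defs.v *)
From HB Require Import structures.
From mathcomp Require Import all_boot all_order all_algebra.
Set Implicit Arguments. Unset Strict Implicit. Unset Printing Implicit Defensive.
Import Order.TTheory GRing.Theory Num.Theory.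

Definition is_prime_power (d : nat) : bool :=
  [exists p : 'I_d.+1, exists k : 'I_d.+1,
     [&& prime p, (0 < k)%N & d == (p : nat) ^ (k : nat)]].

Definition giuga_sum (n : nat) : rat :=
  (\sum_(d <- divisors n | is_prime_power d) (d%:R)^-1 - (n%:R)^-1)%R.

Definition prime_power_giuga (n : nat) : Prop :=
  [/\ (1 < n)%N, ~~ prime n & exists m : nat, (0 < m)%N /\ giuga_sum n = (m%:R : rat)%R].

(* Main.v *)
Require Import Defs.
From HB Require Import structures.
From mathcomp Require Import all_boot all_order all_algebra.
From mathcomp Require Import zify ring.
Set Implicit Arguments. Unset Strict Implicit. Unset Printing Implicit Defensive.
Import Order.TTheory GRing.Theory Num.Theory.
Lemma prod_pos (p a : nat -> nat) m :
  (forall i, (1 <= i <= m)%N -> prime (p i)) ->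
  (0 < \prod_(1 <= i < m.+1) p i ^ a i)%N.
Proof.
move=> hp; rewrite big_nat_cond; apply: prodn_cond_gt0 => i /andP[hi _].
by rewrite expn_gt0 prime_gt0 // hp.
Qed.

Lemma logn_prod (p a : nat -> nat) q m : prime q ->
  (forall i, (1 <= i <= m)%N -> prime (p i)) ->
  logn q (\prod_(1 <= i < m.+1) p i ^ a i) = (\sum_(1 <= i < m.+1 | p i == q) a i)%N.
Proof.
move=> hq; elim: m => [|m IH] hp; first by rewrite !big_geq // logn1.
rewrite big_nat_recr //= (big_mkcond (fun i => p i == q)) big_nat_recr //= -big_mkcond /=.
have hp' : forall i, (1 <= i <= m)%N -> prime (p i).
  by move=> i /andP[h1 h2]; apply: hp; rewrite h1 ltnW.
have hpm : prime (p m.+1) by apply: hp; rewrite /=.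
have h1 : (0 < p m.+1 ^ a m.+1)%N by rewrite expn_gt0 prime_gt0.
have h2 := prod_pos a hp'.
rewrite (lognM _ h2 h1) IH //.
rewrite lognX logn_prime // eq_sym; case: eqP => _; by rewrite ?muln1 ?muln0 ?addn0.
Qed.
Local Open Scope ring_scope.
Lemma geom (q b : nat) : (0 < q)%N ->
  ((q%:R : rat) - 1) * (\sum_(1 <= k < b.+1) ((q ^ k)%:R)^-1) = 1 - ((q ^ b)%:R)^-1.
Proof.
move=> q0; elim: b => [|b IH]; first by rewrite big_geq // mulr0 expn0 invr1 subrr.
rewrite big_nat_recr //= mulrDr IH expnS !natrM.
have hq : (q%:R : rat) != 0 by rewrite pnatr_eq0 -lt0n; lia.
have hqb : ((q ^ b)%:R : rat) != 0 by rewrite pnatr_eq0 expn_eq0; lia.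
by field; rewrite hq hqb.
Qed.
Local Close Scope ring_scope.

Theorem lemma4 (n l : nat) (p a : nat -> nat) :
  (1 < n)%N ->
  n = (\prod_(1 <= i < l.+1) p i ^ a i)%N ->
  (forall i, (1 <= i <= l)%N -> prime (p i)) ->
  (forall i j, (1 <= i)%N -> (i < j)%N -> (j <= l)%N -> (p i < p j)%N) ->
  (forall i, (1 <= i <= l)%N -> (1 <= a i)%N) ->
  a l = 1%N ->
  (forall i, (1 <= i)%N -> (i < l)%N ->
     (p i - 1 = \prod_(1 <= j < i) p j ^ a j)%N) ->
  (p l + 1 = n %/ p l)%N ->
  prime_power_giuga n.
Proof.
move=> hn1 hn hp hmono ha hal hpi hpl.
have hl : (0 < l)%N.
  case: l hn hp hmono ha hal hpi hpl => // hn; rewrite big_geq // in hn; lia.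
set P := fun i => (\prod_(1 <= j < i) p j ^ a j)%N.
have hpl0 : prime (p l) by apply: hp; rewrite hl leqnn.
have hnP : n = (P l * p l)%N by rewrite hn big_nat_recr //= hal expn1.
have hPl : P l = (p l + 1)%N.
  by rewrite hpl hnP mulnK // prime_gt0.
have hinj : forall i j, (1 <= i <= l)%N -> (1 <= j <= l)%N -> p i = p j -> i = j.
  move=> i j /andP[i1 il] /andP[j1 jl] e; case: (ltngtP i j) => // h.
    by have := hmono i j i1 h jl; rewrite e ltnn.
  by have := hmono j i j1 h il; rewrite e ltnn.
have hlog : forall i, (1 <= i <= l)%N -> logn (p i) n = a i.
  move=> i hi; rewrite hn logn_prod ?hp // big_nat_cond.
  rewrite (eq_bigl (fun j => (1 <= j < l.+1)%N && (j == i))); last first.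
    move=> j /=; case hj: (1 <= j < l.+1)%N => //=; apply/eqP/eqP => [e|->] //.
    by apply: hinj => //; move: hj; rewrite ltnS.
  rewrite -big_nat_cond big_nat1_eq; move: hi; rewrite ltnS => -> //.
have n0 : (0 < n)%N by lia.
set L2 := [seq (p i ^ k)%N | i <- index_iota 1 l.+1, k <- index_iota 1 (a i).+1].
have hmem : [seq d <- divisors n | is_prime_power d] =i L2.
  move=> d; rewrite mem_filter -dvdn_divisors //.
  apply/idP/idP.
  - case/andP => /existsP[q /existsP[k /and3P[pq k0 /eqP ->]]] hd.
    have hk : (k <= logn q n)%N by rewrite -pfactor_dvdn.
    case: (boolP (has (fun i => p i == q) (index_iota 1 l.+1))) => [/hasP[i hi /eqP hiq]| /hasPn hno].
      rewrite mem_index_iota ltnS in hi.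
      apply/allpairsPdep; exists i, (k : nat); rewrite !mem_index_iota hiq; split => //.

      by rewrite k0 /= ltnS -(hlog i hi) hiq.
    move: hk; rewrite hn logn_prod // big1_seq; first by lia.
    by move=> i /andP[e hi]; move: (hno i hi); rewrite e.
  - case/allpairsPdep => [i [k [hi hk ->]]]; rewrite !mem_index_iota ltnS in hi hk.
    have pi := hp i hi; have p1 := prime_gt1 pi.
    rewrite pfactor_dvdn // hlog //.
    case/andP: hk => k1 hk; rewrite ltnS in hk; rewrite hk andbT.
    apply/existsP; exists (inord (p i)); apply/existsP; exists (inord k).
    have e1 : (p i <= p i ^ k)%N.
      by have := leq_pexp2l (ltnW p1) k1; rewrite expn1.
    have e2 : (k < p i ^ k)%N by apply: ltn_expl.
    rewrite !inordK ?pi ?eqxx ?k1 // ltnS //; exact: ltnW.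
have huniq : uniq L2.
  apply: allpairs_uniq_dep; first exact: iota_uniq.
    by move=> i _; exact: iota_uniq.
  case=> [i k] [j m] /allpairsPdep [x [y [hx hy e1]]] /allpairsPdep [x' [y' [hx' hy' e2]]] /= e.
  have ex := f_equal (@tag _ (fun _ => nat)) e1; have ey := f_equal (@tagged _ (fun _ => nat)) e1.
  have ex' := f_equal (@tag _ (fun _ => nat)) e2; have ey' := f_equal (@tagged _ (fun _ => nat)) e2.
  simpl in ex, ey, ex', ey'; subst.
  rewrite !mem_index_iota ltnS in hx hy hx' hy'.
  have px := hp _ hx; have px' := hp _ hx'.
  have hdv : (p x %| p x')%N.
    have : (p x %| p x' ^ y')%N by rewrite -e dvdn_exp // ; case/andP: hy.
    by rewrite Euclid_dvdX // => /andP[].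
  rewrite dvdn_prime2 // in hdv; have exx := hinj _ _ hx hx' (eqP hdv); subst x'.
  move/eqP: e; rewrite eqn_exp2l ?prime_gt1 // => /eqP ->; done.
have pl1 := prime_gt1 hpl0.
split => //.
  apply/negP => pr.
  have : (p l %| n)%N by rewrite hnP dvdn_mull.
  rewrite dvdn_prime2 // => /eqP e.
  move: hnP; rewrite -e hPl => h; nia.
exists 1%N; split => //.
rewrite /giuga_sum -big_filter.
rewrite (perm_big L2 (uniq_perm (filter_uniq _ (divisors_uniq n)) huniq hmem)).
rewrite big_allpairs_dep /= big_nat_recr //= hal big_nat1.
rewrite (telescope_sumr_eq (fun i => (- ((P i)%:R : rat)^-1)%R)) //; last first.
  move=> k /andP[k1 kl].
  have pk : prime (p k) by apply: hp; rewrite k1 ltnW.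
  have hg := geom (a k) (prime_gt0 pk).
  have hPk : P k.+1 = (P k * p k ^ a k)%N by rewrite /P big_nat_recr.
  have ep : p k = (P k + 1)%N by have := hpi k k1 kl; have := prime_gt1 pk; rewrite /P; lia.
  have Pk0 : (0 < P k)%N by have := hpi k k1 kl; have := prime_gt1 pk; rewrite /P; lia.
  rewrite hPk ep in hg *.
  move: hg; rewrite natrD addrK.
  have hx : ((P k)%:R : rat) != 0%R by rewrite pnatr_eq0; lia.
  set G := (\sum_(_ <= _ < _) _)%R => hg.
  apply: (mulfI hx); rewrite hg natrM natrX natrD.
  have hy : (((P k)%:R + 1)^+ a k : rat)%R != 0%R by rewrite expf_eq0 natr1 pnatr_eq0 andbF.
  by field; rewrite hx hy.
have P1 : P 1%N = 1%N by rewrite /P big_geq.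
rewrite P1 hnP natrM hPl natrD expn1.
have hx : ((p l)%:R : rat) != 0%R by rewrite pnatr_eq0; lia.
have hy : ((p l)%:R + 1 : rat)%R != 0%R by rewrite natr1 pnatr_eq0; lia.
by field; rewrite hx hy.
Qed.
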